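(* Let $q$ be a prime power, $Q=q^m$, $\mathbb{L}=\mathrm{GF}(Q)$, $n\mid Q-1$, and $F_n=\{f\in\mathbb{L}^n : f_{qi\bmod n}=f_i^q\ \forall i\in\mathbb{Z}/n\mathbb{Z}\}$. Let $0\le\delta\le1/2$ and $s=\lfloor\delta n\rfloor$. If every $g\in\mathbb{L}^n$ can be written as $g=f+h$ with $f\in F_n$ and $|\{i : h_i\ne0\}|\le s$, then $$1+\frac{h_2(\delta)}{\log_2 q}+\delta\log_q(Q-1)\ge m-o(1),$$ where $h_2(\delta)=-\delta\log_2\delta-(1-\delta)\log_2(1-\delta)$ and $o(1)$ denotes a term tending to $0$ as $n\to\infty$. *)

(* Defs.v *)
From HB Require Import structures.
From mathcomp Require Import all_boot all_order all_algebra.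
From mathcomp Require Import all_classical all_reals all_analysis.
Set Implicit Arguments. Unset Strict Implicit. Unset Printing Implicit Defensive.
Import Order.TTheory GRing.Theory Num.Theory.
Local Open Scope ring_scope.

Definition prime_power (q : nat) : Prop :=
  exists p k : nat, prime p /\ (0 < k)%N /\ q = (p ^ k)%N.

Definition mulq_ord (n q : nat) (i : 'I_n) : 'I_n :=
  Ordinal (ltn_pmod (q * i) (leq_ltn_trans (leq0n i) (ltn_ord i))).

Definition in_Fn (L : finFieldType) (q n : nat) (f : 'I_n -> L) : Prop :=
  forall i : 'I_n, f (mulq_ord q i) = f i ^+ q.

Definition wt (L : finFieldType) (n : nat) (h : 'I_n -> L) : nat :=
  #|[set i : 'I_n | h i != 0]|.

Definition Fn_covers (R : realType) (L : finFieldType) (q n : nat) (delta : R)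
  : Prop :=
  forall g : 'I_n -> L, exists (f h : 'I_n -> L),
    in_Fn q f /\ (forall i, g i = f i + h i) /\
    ((wt h)%:Z <= Num.floor (delta * n%:R))%R.

Definition log2 (R : realType) (x : R) : R := ln x / ln 2.
Definition logb (R : realType) (b x : R) : R := ln x / ln b.

Definition xlog2x (R : realType) (x : R) : R := if x == 0 then 0 else x * log2 x.

Definition h2 (R : realType) (d : R) : R := - xlog2x d - xlog2x (1 - d).

(* Main.v *)
Require Import Defs.
From HB Require Import structures.
From mathcomp Require Import all_boot all_order all_algebra.
From mathcomp Require Import all_classical all_reals all_analysis.
From mathcomp Require Import all_fingroup.
From mathcomp Require Import ring lra.
Import Order.TTheory GRing.Theory Num.Theory.
Import numFieldNormedType.Exports.
Local Open Scope ring_scope.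

Lemma card_roots_XnX (L : finFieldType) (N : nat) : (1 < N)%N ->
  (#|[set y : L | y ^+ N == y]| <= N)%N.
Proof.
move=> N1.
pose p : {poly L} := 'X^N - 'X.
have szp : size p = N.+1.
  rewrite /p size_polyDl size_polyXn // size_polyN size_polyX ltnS //.
have p0 : p != 0 by rewrite -size_poly_eq0 szp.
have := max_poly_roots p0 (rs := enum [set y : L | y ^+ N == y]).
rewrite szp ltnS cardE; apply; last exact: enum_uniq.
apply/allP => y; rewrite mem_enum inE => /eqP hy.
by rewrite /root /p !hornerE hy subrr.
Qed.

Section CardFn.
Variables (L : finFieldType) (q n : nat) (s : {perm 'I_n}).
Hypothesis q1 : (1 < q)%N.

Definition Fset := [set f : {ffun 'I_n -> L} | [forall i, f (s i) == f i ^+ q]].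

Lemma Fset_iter f : f \in Fset -> forall k x, f ((s ^+ k)%g x) = f x ^+ (q ^ k).
Proof.
rewrite inE => /forallP Hf k x; elim: k => [|k IH]; first by rewrite expg0 perm1 expr1.
by rewrite expgSr permM (eqP (Hf _)) IH expnSr exprM.
Qed.

Lemma Fset_orbit f x : f \in Fset -> f x ^+ (q ^ #|porbit s x|) = f x.
Proof. by move=> Ff; rewrite -Fset_iter // permX iter_porbit. Qed.

Definition Phi (f : {ffun 'I_n -> L}) : {ffun {set 'I_n} -> L} :=
  [ffun X => if X \in porbits s then
     (if [pick x in X] is Some x then f x else 0) else 0].

Definition Sfam (X : {set 'I_n}) : {set L} :=
  if X \in porbits s then [set y : L | y ^+ (q ^ #|X|) == y] else [set 0].

Lemma card_Fset : (#|Fset| <= q ^ n)%N.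
Proof.
have inj : {in Fset &, injective Phi}.
  move=> f g Ff Fg /ffunP eq; apply/ffunP => i.
  have := eq (porbit s i); rewrite !ffunE.
  have -> : porbit s i \in porbits s by apply: imset_f.
  case: pickP => [x xi|/(_ i)]; last by rewrite porbit_id.
  move=> fgx; rewrite porbit_sym in xi.
  case/porbitP: xi => k ->; by rewrite !Fset_iter // fgx.
have sub : Phi @: Fset \subset (family Sfam : pred _).
  apply/fintype.subsetP => _ /imsetP[f Ff ->]; apply/familyP => X.
  rewrite /Sfam !ffunE; case: ifP => XP; last by rewrite inE.
  rewrite inE; case: pickP => [x xX|_].
    case/imsetP: XP => y _ XE; move: xX; rewrite XE -eq_porbit_mem => /eqP <-.
    by rewrite Fset_orbit.
  by rewrite expr0n expn_eq0 eqn0Ngt (ltnW q1) /=.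
rewrite -(card_in_imset inj); apply: (leq_trans (subset_leq_card sub)).
rewrite card_family foldrE big_image /=.
rewrite (bigID (fun X => X \in porbits s)) /=.
rewrite [X in (_ * X)%N]big1 ?muln1; last by move=> X /negbTE XP; rewrite /Sfam XP cards1.
have -> : (q ^ n = \prod_(X in porbits s) q ^ #|X|)%N.
  rewrite -{1}[n]card_ord -prod_nat_const (partition_big_imset (porbit s)) /=.
  apply: eq_bigr => X /imsetP[x _ ->]; rewrite prod_nat_const; congr (_ ^ _)%N.
  idtac.
  by apply: eq_card => y; rewrite -eq_porbit_mem.
apply: leq_prod => X XP; rewrite /Sfam XP; apply: card_roots_XnX.
case/imsetP: XP => x _ ->; rewrite -[1%N](expn0 q) ltn_exp2l // lt0n.
exact: card_porbit_neq0.
Qed.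
End CardFn.

Definition Hset (R : realType) (L : finFieldType) (n : nat) (delta : R) :=
  [set h : {ffun 'I_n -> L} | ((wt h)%:Z <= Num.floor (delta * n%:R))%R].

Arguments Hset {R} L n delta.

Lemma cover_card (R : realType) (L : finFieldType) q n (delta : R) (s : {perm 'I_n}) :
  (forall i, s i = mulq_ord q i) -> Fn_covers L q n delta ->
  (#|L| ^ n <= #|Fset L q n s| * #|Hset L n delta|)%N.
Proof.
move=> Hs cov.
rewrite -{1}[n]card_ord -card_ffun -cardsT -cardsX.
apply: (leq_trans _ (leq_imset_card (fun p : {ffun 'I_n -> L} * {ffun 'I_n -> L} =>
   [ffun i => p.1 i + p.2 i]) _)).
apply: subset_leq_card; apply/fintype.subsetP => g _.
have [f [h [Ff [E W]]]] := cov g.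
apply/imsetP; exists (finfun f, finfun h).
  rewrite !inE; apply/andP; split.
    by apply/forallP => i; rewrite !ffunE Hs Ff.
  have -> : wt (finfun h) = wt h.
    by rewrite /wt; apply: eq_card => i; rewrite !inE ffunE.
  exact: W.
by apply/ffunP => i; rewrite !ffunE E.
Qed.

Lemma Hset_bound (R : realType) (L : finFieldType) n (d : R) : 0 <= d -> d <= 1/2 ->
  (#|Hset L n d|%:R : R) <= expR (n%:R * (h2 d * ln 2 + d * ln (#|L|%:R - 1))).
Proof.
move=> d0 d12.
have Q2 : (2 <= #|L|)%N := card_finNzRing_gt1 L.
have Q1R : 1 <= (#|L|%:R : R) - 1.
  have : (2%:R : R) <= #|L|%:R by rewrite ler_nat.
  lra.
have ln2 : 0 < ln (2:R) by apply: ln_gt0; lra.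
case: (eqVneq d 0) => [->|dn0].
  have -> : h2 (0:R) = 0.
    rewrite /h2 /xlog2x eqxx !oppr0 !addr0 oner_eq0 /log2 ln1 !mul0r mulr0 oppr0 addr0 ?subr0.
    by [].
  rewrite !mul0r add0r mulr0 expR0.
  have H : (#|Hset L n (0:R)| <= 1)%N.
    have S : Hset L n (0:R) \subset (finset.set1 (0 : {ffun 'I_n -> L})).
    apply/fintype.subsetP => h; rewrite !inE mul0r floor0 => W.
    have : wt h = 0%N by move: W; rewrite lez_nat leqn0 => /eqP.
    rewrite /wt => /eqP; rewrite cards_eq0 => /eqP E.
    apply/eqP/ffunP => i; rewrite ffunE; apply/eqP.
    have : i \notin [set i | h i != 0] by rewrite E inE.
    by rewrite inE negbK.
    by rewrite -(cards1 (0 : {ffun 'I_n -> L})) subset_leq_card.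
  by rewrite -(ler_nat R) in H.
have dpos : 0 < d by rewrite lt0r dn0.
set Q1 := (#|L|%:R : R) - 1.
have Q1pos : 0 < Q1 by rewrite /Q1; lra.
set a := d / Q1.
set b := 1 - d.
have apos : 0 < a by rewrite /a divr_gt0.
have bpos : 0 < b by rewrite /b; lra.
pose w (h : {ffun 'I_n -> L}) := \prod_i (if h i == 0 then b else a).
have sumw : \sum_h w h = 1.
  rewrite /w -(bigA_distr_bigA (fun (i : 'I_n) (y : L) => if y == 0 then b else a)) /=.
  rewrite big1 // => i _.
  rewrite (bigD1 0) //= eqxx (eq_bigr (fun _ => a)); last by move=> y /negbTE ->.
  rewrite sumr_const (_ : #|_| = #|L|.-1); last exact: cardC1.
  rewrite -mulr_natr -subn1 natrB ?(ltnW Q2) // -/Q1 /a divfK ?gt_eqF // /b.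
  by rewrite subrK.
set K := expR _.
have wlow h : h \in Hset L n d -> 1 <= K * w h.
  rewrite inE => W.
  set k := wt h in W.
  have kle : (k%:R : R) <= d * n%:R.
    rewrite -(ler_int R) in W; exact: le_trans W (floor_le _).
  have kn : (k <= n)%N by rewrite /k /wt -[X in (_ <= X)%N]card_ord max_card.
  have wE : w h = a ^+ k * b ^+ (n - k).
    rewrite /w (bigID (fun i => h i == 0)) /= mulrC.
    rewrite (eq_bigr (fun _ => a)); last by move=> i /negbTE ->.
    rewrite [X in _ * X](eq_bigr (fun _ => b)); last by move=> i ->.
    rewrite !prodr_const; congr (_ ^+ _ * _ ^+ _).
      by rewrite /k /wt; apply: eq_card => i; rewrite !inE.
    have := cardC (fun i => h i != 0); rewrite card_ord => Hc.
    rewrite -[in RHS]Hc.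
    rewrite (_ : #|(fun i => h i != 0)| = k) ?addKn //.
      by apply: eq_card => i; rewrite !inE negbK.
    by rewrite /k /wt; apply: eq_card => i; rewrite !inE.
  rewrite wE -[a]lnK ?posrE // -[b]lnK ?posrE // -!expRM_natl /K -!expRD.
  rewrite -[X in X <= _]expR0 ler_expR.
  rewrite /a ln_div ?posrE // natrB //.
  have l2E : h2 d * ln 2 = - (d * ln d) - (1 - d) * ln (1 - d).
    rewrite /h2 /xlog2x (negbTE dn0) (_ : (1 - d == 0) = false); last first.
      by apply/negbTE; rewrite subr_eq0 eq_sym; apply/eqP => E; move: d12; rewrite E; lra.
    rewrite /log2; field; by rewrite (gt_eqF ln2).
  rewrite l2E /b.
  have L12 : ln d <= ln (1 - d) by rewrite ler_ln ?posrE //; lra.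
  have L3 : 0 <= ln Q1 by apply: ln_ge0.
  set N := (n%:R : R); set kk := (k%:R : R).
  have -> : N * (- (d * ln d) - (1 - d) * ln (1 - d) + d * ln Q1) +
     (kk * (ln d - ln Q1) + (N - kk) * ln (1 - d)) =
     (d * N - kk) * (ln (1 - d) - ln d + ln Q1) by ring.
  apply: mulr_ge0; lra.
have -> : (#|Hset L n d|%:R : R) = \sum_(h in Hset L n d) 1 by rewrite sumr_const.
apply: (le_trans (ler_sum _ (fun h hH => wlow h hH))).
rewrite -mulr_sumr -[X in _ <= X]mulr1 -sumw ler_pM2l ?expR_gt0 //.
rewrite [X in _ <= X](bigID (mem (Hset L n d))) /= lerDl sumr_ge0 // => h _.
by rewrite /w prodr_ge0 // => i _; case: ifP => _; apply: ltW.
Qed.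

Lemma mulq_inj (q n : nat) : coprime q n -> injective (@mulq_ord n q).
Proof.
move=> cqn.
have key : forall i j : nat, (i <= j)%N -> (j < n)%N ->
   (q * j == q * i %[mod n])%N -> i = j.
  move=> i j ij jn; rewrite eqn_mod_dvd ?leq_mul2l ?ij ?orbT // -mulnBr.
  rewrite Gauss_dvdr; last by rewrite coprime_sym.
  case: (posnP (j - i)) => [/eqP|]; first by rewrite subn_eq0 => ji _; apply/eqP; rewrite eqn_leq ij ji.
  by move=> pos /(dvdn_leq pos) => H; exfalso; move: H; rewrite leqNgt (leq_ltn_trans (leq_subr _ _) jn).
move=> x y /(congr1 val) /= E; apply/val_inj => /=.
case: (leqP x y) => xy.
  by apply: key => //; rewrite E.
by apply/esym/key => //; [exact: ltnW | rewrite E].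
Qed.

Local Open Scope classical_set_scope.
Local Open Scope ring_scope.

Theorem corollary11p4 (R : realType) :
  exists eps : nat -> R, eps @ \oo --> (0 : R) /\
  forall (L : finFieldType) (q m n : nat) (delta : R),
    prime_power q ->
    #|L| = (q ^ m)%N ->
    (n %| (q ^ m).-1)%N ->
    0 <= delta -> delta <= 1 / 2 ->
    Fn_covers L q n delta ->
    m%:R - eps n <=
      1 + h2 delta / log2 (q%:R : R) + delta * logb (q%:R : R) ((q ^ m).-1)%:R.
Proof.
exists (fun=> 0); split; first exact: cvg_cst.
move=> L q m n delta [p [k [pp [k0 qE]]]] cardL dvd d0 d12 cov.
have q1 : (1 < q)%N by rewrite qE -[1%N](expn0 p) ltn_exp2l ?prime_gt1.
have Q2 : (1 < q ^ m)%N by rewrite -cardL; exact: card_finNzRing_gt1.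
have n0 : (0 < n)%N.
  rewrite lt0n; apply/eqP => n0; move: dvd; rewrite n0 dvd0n.
  by case: (q ^ m)%N Q2 => [|[|]].
have m0 : (0 < m)%N.
  by rewrite lt0n; apply/eqP => m0; move: Q2; rewrite m0 expn0.
have cqn : coprime q n.
  have := coprimeSn (q ^ m).-1; rewrite prednK ?(ltnW Q2) // coprime_pexpl //.
  by move/coprime_dvdr; apply.
pose s := perm (@mulq_inj q n cqn).
have Hs : forall i, s i = mulq_ord q i by move=> i; rewrite permE.
have H1 := @cover_card R L q n delta s Hs cov.
have H2 := @card_Fset L q n s q1.
have H3 := @Hset_bound R L n delta d0 d12.
set K := expR _ in H3.
have q0R : (0 : R) < q%:R by rewrite ltr0n ltnW.
have lnq : 0 < ln (q%:R : R) by apply: ln_gt0; rewrite ltr1n.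
have ln2 : 0 < ln (2:R) by apply: ln_gt0; lra.
have HR : ((q ^ m) ^ n)%:R <= (q ^ n)%:R * K :> R.
  rewrite -cardL; apply: le_trans (_ : ((#|Fset L q n s| * #|Hset L n delta|)%:R : R) <= _).
    by rewrite ler_nat.
  rewrite natrM; apply: ler_pM => //; first by rewrite ler_nat.
have HL : (m * n)%:R * ln (q%:R : R) <= n%:R * ln (q%:R : R) + ln K.
  have P1 : ((q ^ m) ^ n)%:R \in (Num.pos : qualifier 0 R).
    by rewrite posrE ltr0n expn_gt0 expn_gt0 (ltnW q1).
  have Pq : (q ^ n)%:R \in (Num.pos : qualifier 0 R) by rewrite posrE ltr0n expn_gt0 (ltnW q1).
  have PK : K \in Num.pos by rewrite posrE expR_gt0.
  have P2 : (q ^ n)%:R * K \in (Num.pos : qualifier 0 R).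
    by rewrite posrE mulr_gt0 // -posrE.
  have := HR; rewrite -(ler_ln P1 P2) (lnM Pq PK).
  by rewrite -expnM !natrX !lnXn // !mulr_natl.
move: HL; rewrite /K expRK.
have QE : (((q ^ m).-1)%:R : R) = #|L|%:R - 1 by rewrite cardL -subn1 natrB ?(ltnW Q2).
rewrite /logb /log2 QE natrM.
set X := h2 delta; set Y := ln (#|L|%:R - 1 : R); set lq := ln (q%:R : R).
set l2 := ln (2 : R); set N := (n%:R : R); set M := (m%:R : R).
have N0 : 0 < N by rewrite ltr0n.
move=> HL.
have HL' : M * lq <= lq + (X * l2 + delta * Y).
  rewrite -(ler_pM2l N0); rewrite mulrDr; move: HL; rewrite -mulrA (mulrC N). lra.
have -> : 1 + X / (lq / l2) + delta * (Y / lq) = (lq + (X * l2 + delta * Y)) / lq.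
  by field; rewrite (gt_eqF lnq) (gt_eqF ln2).
by rewrite subr0 ler_pdivlMr.
Qed.
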